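(* Let $f\in K[z]$ be a polynomial of degree at least $2$ and let $\mu$ be an $f$-invariant Radon probability measure on $J(f)$. If $\log_p f^\#$ is $\mu$-integrable, then $$L(f,\mu)=\int_{\mathsf{P}^1}\log_p\|f'\|_\xi\,d\mu(\xi).$$
   Context: $K$ is an algebraically closed field of characteristic $0$, complete with respect to a nontrivial nonarchimedean absolute value. Set $p=\mathrm{res.char}(K)$ if positive and $p=e$ otherwise; $\log_p$ is the logarithm to base $p$. $\mathsf{P}^1$ is the Berkovich projective line over $K$, $\mathsf{A}^1=\mathsf{P}^1\setminus\{\infty\}$; $\|g\|_\xi$ is the value at $g\in K[z]$ of the seminorm $\xi\in\mathsf{A}^1$. $\mathcal{K}(f)$ is the set of $\xi\in\mathsf{A}^1$ with $f^n(\xi)\not\to\infty$, $J(f)=\partial\mathcal{K}(f)$. The chordal derivative is $f^\#(\xi)=\frac{\max(1,\|z\|_\xi)^2}{\max(1,\|f\|_\xi)^2}\|f'\|_\xi$, and $L(f,\mu)=\int\log_p f^\#\,d\mu$. *)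

(* Defs.v *)
From HB Require Import structures.
From mathcomp Require Import all_boot all_order all_algebra.
From mathcomp Require Import all_classical all_reals all_analysis.
Set Implicit Arguments. Unset Strict Implicit. Unset Printing Implicit Defensive.
Import Order.TTheory GRing.Theory Num.Theory.
Import numFieldNormedType.Exports.
Local Open Scope classical_set_scope.
Local Open Scope ring_scope.

Definition nonarch_complete_abs (K : fieldType) (R : realType) (absK : K -> R) : Prop :=
  (forall x, 0 <= absK x) /\
  [/\ (forall x, absK x = 0 <-> x = 0),
      (forall x y, absK (x * y) = absK x * absK y),
      (forall x y, absK (x + y) <= Num.max (absK x) (absK y)),
      (exists x, absK x != 0 /\ absK x != 1) &
      (forall u : nat -> K,
         (forall e : R, 0 < e -> exists N, forall m n, (N <= m)%N -> (N <= n)%N ->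
            absK (u m - u n) < e) ->
         exists l : K, (fun n => absK (u n - l)) @ \oo --> (0 : R))].

(* p = residue characteristic if positive, e otherwise.  The residue field
   has characteristic the prime q iff |q| < 1. *)
Definition resp (K : fieldType) (R : realType) (absK : K -> R) : R :=
  let P := [set q : nat | prime q /\ absK q%:R < 1] in
  if pselect (exists q, P q) then (xget 0%N P)%:R else expR 1.

Definition elog_p (K : fieldType) (R : realType) (absK : K -> R) (x : R) : \bar R :=
  if x == 0 then -oo%E else (ln x / ln (resp absK))%:E.

(* Ambient space: real functions on K[z] with the pointwise (product) topology;
   the Berkovich affine line is the subset of multiplicative seminorms on K[z]
   extending absK, with the induced (weak) topology. *)
Notation berkT K R := {ptws {poly K%type} -> R%type}.

Definition berkA1 (K : fieldType) (R : realType) (absK : K -> R) : set (berkT K R) :=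
  [set xi | [/\ (forall g, 0 <= xi g),
                (forall g h, xi (g + h) <= xi g + xi h),
                (forall g h, xi (g * h) = xi g * xi h) &
                (forall c, xi c%:P = absK c)]].

Notation berkM K R := (g_sigma_algebraType (@open (berkT K R))).

Definition berk_act (K : fieldType) (R : realType) (f : {poly K}) (xi : berkT K R)
  : berkT K R := fun g => xi (g \Po f).

(* filled Julia set K(f): points of A^1 whose orbit does not tend to infinity,
   i.e. ||z||_{f^n(xi)} does not tend to +oo *)
Definition filledJ (K : fieldType) (R : realType) (absK : K -> R) (f : {poly K})
  : set (berkT K R) :=
  [set xi | berkA1 absK xi /\
     ~ ((fun n => iter n (berk_act f) xi 'X) @ \oo --> +oo)].

Definition rel_interior (K : fieldType) (R : realType) (absK : K -> R)
  (A : set (berkT K R)) : set (berkT K R) :=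
  [set xi | exists U : set (berkT K R), [/\ open U, U xi & U `&` berkA1 absK `<=` A]].

(* Julia set J(f) = boundary of K(f) in A^1 (A^1 is closed in the ambient space,
   so the closure is the relative closure) *)
Definition juliaJ (K : fieldType) (R : realType) (absK : K -> R) (f : {poly K})
  : set (berkT K R) :=
  closure (filledJ absK f) `\` rel_interior absK (filledJ absK f).

Definition fsharp (K : fieldType) (R : realType) (f : {poly K}) (xi : berkT K R) : R :=
  Num.max 1 (xi 'X) ^+ 2 / Num.max 1 (xi f) ^+ 2 * xi f^`().

Definition Lyap (K : fieldType) (R : realType) (absK : K -> R) (f : {poly K})
  (mu : probability (berkM K R) R) : \bar R :=
  (\int[mu]_xi elog_p absK (fsharp f xi))%E.

Definition radon (K : fieldType) (R : realType) (mu : probability (berkM K R) R) : Prop :=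
  forall B : set (berkM K R), measurable B ->
    mu B = ereal_sup [set mu C | C in [set C : set (berkM K R) |
                         @compact (berkT K R) C /\ C `<=` B]].

Definition f_invariant (K : fieldType) (R : realType) (f : {poly K})
  (mu : probability (berkM K R) R) : Prop :=
  forall B : set (berkM K R), measurable B -> mu (berk_act f @^-1` B) = mu B.

(* Main.v *)
Require Import Defs.
Set Warnings "-notation-overridden,-ambiguous-paths,-notation-incompatible-prefix,-deprecated".
From HB Require Import structures.
From mathcomp Require Import all_boot all_order all_algebra.
From mathcomp Require Import all_classical all_reals all_analysis.
From mathcomp Require Import ring lra zify.
From mathcomp Require Import measurable_realfun.
Import Order.TTheory GRing.Theory Num.Theory.
Import numFieldNormedType.Exports.
Local Open Scope classical_set_scope.
Local Open Scope ring_scope.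
From HB Require Import structures.
From mathcomp Require Import all_boot all_order all_algebra.
From mathcomp Require Import all_classical all_reals all_analysis.
Import Order.TTheory GRing.Theory Num.Theory.
Import numFieldNormedType.Exports.
Local Open Scope classical_set_scope.
Local Open Scope ring_scope.
Lemma meas_eval (K : fieldType) (R : realType) (g : {poly K}) :
  measurable_fun [set: berkM K R] (fun xi : berkM K R => (xi : berkT K R) g).
Proof.
apply: (measurability _ (measurable_realfun.RGenOpens.measurableE R)).
move=> _ [_ [a [b ->] <-]]; rewrite setTI.
apply: sub_sigma_algebra.
have : continuous (fun xi : berkT K R => xi g) by exact: proj_continuous.
move/continuousP; apply; exact: interval_open.
Qed.
Lemma act_cont (K : fieldType) (R : realType) (f : {poly K}) :
  continuous (berk_act f : berkT K R -> berkT K R).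
Proof.
move=> x.
rewrite /continuous_at.
have FF : Filter (berk_act f @ x).
  apply: (@fmap_filter _ _ (berk_act f) (nbhs x)).
pose Tc := (fun i : {poly K} => Topological.class
    (initial_topology (fun f : (forall i : {poly K}, (R : topologicalType)) => f i))).
have := (@cvg_sup _ _ Tc (berk_act f @ x) (berk_act f x) FF).
case=> _ H; apply: H => i A /=.
move=> [_ [[B Bop <-] Bfs sBfA]].
have := @proj_continuous _ (fun _ : {poly K} => R) (i \Po f) x.
move=> /(_ B) hB.
have : nbhs x ((fun xi : berkT K R => xi (i \Po f)) @^-1` B).
  apply: hB; apply: open_nbhs_nbhs; split => //.
move=> hN.
apply: (@filterS _ _ _ _ _ _ hN) => y /= hy.
exact: sBfA.
Qed.

Lemma meas_act (K : fieldType) (R : realType) (f : {poly K}) :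
  measurable_fun [set: berkM K R] (berk_act f : berkM K R -> berkM K R).
Proof.
apply: (@measurability _ _ (berkM K R) (berkM K R) setT _ (@open (berkT K R))) => //.
move=> _ [A oA <-]; rewrite setTI; apply: sub_sigma_algebra.
by move/continuousP: (@act_cont K R f); apply.
Qed.
Section Alg.
Context {K : fieldType} {R : realType} {absK : K -> R}
  (habs : nonarch_complete_abs absK).

Lemma abs0 : absK 0 = 0.
Proof. by case: habs => _ [h _ _ _ _]; apply/h. Qed.

Lemma absM x y : absK (x * y) = absK x * absK y.
Proof. by case: habs => _ [_ h _ _ _]. Qed.

Lemma abs_ge0 x : 0 <= absK x.
Proof. by case: habs. Qed.

Lemma abs_neq0 x : x != 0 -> absK x != 0.
Proof.
case: habs => _ [h _ _ _ _] xn0; apply/eqP => /h /eqP; exact/negP.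
Qed.

Lemma abs1 : absK 1 = 1.
Proof.
have h := absM 1 1; rewrite mulr1 in h.
have h0 : absK 1 != 0 by apply: abs_neq0; exact: oner_neq0.
by apply: (mulIf h0); rewrite mul1r -h.
Qed.

Lemma absN1 : absK (-1) = 1.
Proof.
have h := absM (-1) (-1); rewrite mulrNN mulr1 abs1 in h.
have h0 := abs_ge0 (-1).
apply/eqP; rewrite -subr_eq0.
have : (absK (-1) - 1) * (absK (-1) + 1) = 0.
  by rewrite mulrDr mulrBl -h; ring.
move/eqP; rewrite mulf_eq0 => /orP[//|].
by rewrite gt_eqF //; apply: (lt_le_trans ltr01); rewrite lerDr.
Qed.

Context {xi : berkT K R}.
Hypothesis hxi : berkA1 absK xi.

Lemma xiC c : xi c%:P = absK c.
Proof. by case: hxi. Qed.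

Lemma xiM g h : xi (g * h) = xi g * xi h.
Proof. by case: hxi. Qed.

Lemma xiD g h : xi (g + h) <= xi g + xi h.
Proof. by case: hxi. Qed.

Lemma xi_ge0 g : 0 <= xi g.
Proof. by case: hxi. Qed.

Lemma xi0 : xi 0 = 0.
Proof. by rewrite -polyC0 xiC abs0. Qed.

Lemma xiN g : xi (- g) = xi g.
Proof. by rewrite -mulN1r -polyCN xiM xiC absN1 mul1r. Qed.

Lemma xi_sum n (F : 'I_n -> {poly K}) :
  xi (\sum_(i < n) F i) <= \sum_(i < n) xi (F i).
Proof.
elim: n F => [|n IH] F; first by rewrite !big_ord0 xi0.
rewrite !big_ord_recr /=.
apply: (le_trans (xiD _ _)); rewrite lerD2r; exact: IH.
Qed.

Lemma xiXn i : xi ('X^i) = xi 'X ^+ i.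
Proof.
elim: i => [|i IH]; first by rewrite expr0 -polyC1 xiC abs1 expr0.
by rewrite exprSr xiM IH exprSr.
Qed.

Lemma xi_term c i : xi (c *: 'X^i) = absK c * xi 'X ^+ i.
Proof. by rewrite -mul_polyC xiM xiC xiXn. Qed.

Lemma xi_upper (f : {poly K}) :
  xi f <= \sum_(i < size f) absK f`_i * xi 'X ^+ i.
Proof.
rewrite -{1}[f]coefK poly_def.
apply: le_trans (xi_sum (size f) (fun i : 'I_(size f) => f`_i *: 'X^i)) _.
by apply: ler_sum => i _; rewrite xi_term.
Qed.

Lemma xi_lower (f : {poly K}) :
  absK (lead_coef f) * xi 'X ^+ (size f).-1 <=
  xi f + \sum_(i < (size f).-1) absK f`_i * xi 'X ^+ i.
Proof.
case hs : (size f) => [|d] /=.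
  move/eqP: hs; rewrite size_poly_eq0 => /eqP ->.
  by rewrite lead_coef0 abs0 mul0r big_ord0 addr0 xi_ge0.
have hf : f = \sum_(i < d) f`_i *: 'X^i + f`_d *: 'X^d.
  by rewrite -{1}[f]coefK poly_def hs big_ord_recr.
have -> : lead_coef f = f`_d by rewrite lead_coefE hs.
rewrite -xi_term.
have -> : f`_d *: 'X^d = f - \sum_(i < d) f`_i *: 'X^i.
  by rewrite {2}hf addrC addKr.
apply: (le_trans (xiD _ _)); rewrite xiN lerD2l.
apply: le_trans (xi_sum d (fun i : 'I_d => f`_i *: 'X^i)) _.
by apply: ler_sum => i _; rewrite xi_term.
Qed.

End Alg.
Lemma real_esc (R : realType) (c S0 r s P : R) (e : nat) :
  0 < c -> 0 <= S0 -> 1 + (S0 + 2) / c <= r ->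
  c * r ^+ e.+2 <= s + P -> P <= S0 * r ^+ e.+1 -> r + 1 <= s.
Proof.
move=> c0 S00 hr h1 h2.
have r1 : 1 <= r.
  apply: le_trans hr; rewrite lerDl; apply: divr_ge0 => //; lra.
have q1 : r <= r ^+ e.+1.
  rewrite -{1}(expr1 r); apply: ler_weXn2l => //.
have hcr : c + S0 + 2 <= c * r.
  have := ler_wpM2l (ltW c0) hr.
  rewrite mulrDr mulr1 mulrCA mulfV ?gt_eqF // mulr1 addrA //.
have e2 : r ^+ e.+2 = r * r ^+ e.+1 by rewrite exprS.
rewrite e2 in h1.
set q := r ^+ e.+1 in q1 h1 h2 *.
nra.
Qed.
Lemma act_A1 {K : fieldType} {R : realType} {absK : K -> R} (f : {poly K})
  (xi : berkT K R) : berkA1 absK xi -> berkA1 absK (berk_act f xi).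
Proof.
case=> h0 hD hM hC; split; rewrite /berk_act.
- by move=> g; exact: h0.
- by move=> g h; rewrite comp_polyD; exact: hD.
- by move=> g h; rewrite comp_polyM; exact: hM.
- by move=> c; rewrite comp_polyC; exact: hC.
Qed.

Definition R0 {K : fieldType} {R : realType} (absK : K -> R) (f : {poly K}) : R :=
  1 + (\sum_(i < (size f).-1) absK f`_i + 2) / absK (lead_coef f).

Lemma esc_step {K : fieldType} {R : realType} {absK : K -> R}
  (habs : nonarch_complete_abs absK) (f : {poly K}) (hdeg : (2 < size f)%N)
  (xi : berkT K R) : berkA1 absK xi -> R0 absK f <= xi 'X -> xi 'X + 1 <= xi f.
Proof.
move=> hxi hr.
have hf0 : f != 0 by rewrite -size_poly_eq0 -lt0n; apply: leq_trans hdeg.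
have c0 : 0 < absK (lead_coef f).
  rewrite lt_def (abs_ge0 habs) // andbT; apply: (abs_neq0 habs) => //; rewrite lead_coef_eq0 //.
have hd : (size f).-1 = (size f - 3)%N.+2.
  by move: hdeg; case: (size f) => [|[|[|n]]] //= _; rewrite subSS subSS subSS subn0.
have S00 : 0 <= \sum_(i < (size f).-1) absK f`_i.
  apply: sumr_ge0 => i _; exact: abs_ge0 habs _.
have hlow := xi_lower habs hxi f.
have r1 : 1 <= xi 'X.
  apply: le_trans hr; rewrite lerDl; apply: divr_ge0 => //; [lra|exact: ltW].
apply: (@real_esc R _ _ _ _ (\sum_(i < (size f).-1) absK f`_i * xi 'X ^+ i) (size f - 3)%N c0 S00 hr).
  by rewrite -hd; exact: hlow.
rewrite mulr_suml; apply: ler_sum => i _.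
apply: ler_wpM2l; first exact: abs_ge0 habs _.
apply: ler_weXn2l => //.
have := ltn_ord i; move: (nat_of_ord i) => k; rewrite hd ltnS //.
Qed.

Lemma esc_iter {K : fieldType} {R : realType} {absK : K -> R}
  (habs : nonarch_complete_abs absK) (f : {poly K}) (hdeg : (2 < size f)%N)
  (xi : berkT K R) : berkA1 absK xi -> R0 absK f <= xi 'X ->
  forall n, berkA1 absK (iter n (berk_act f) xi) /\
            R0 absK f + n%:R <= iter n (berk_act f) xi 'X.
Proof.
move=> hxi hr; elim=> [|n [IH1 IH2]] /=; first by rewrite addr0.
split; first exact: act_A1.
rewrite /berk_act comp_polyX.
have h := esc_step habs f hdeg _ IH1.
apply: le_trans (h _); last first.
  apply: le_trans IH2; rewrite lerDl; exact: ler0n.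
by rewrite -natr1 addrA lerD2r.
Qed.

Lemma filledJ_bound {K : fieldType} {R : realType} {absK : K -> R}
  (habs : nonarch_complete_abs absK) (f : {poly K}) (hdeg : (2 < size f)%N)
  (xi : berkT K R) : filledJ absK f xi -> xi 'X < R0 absK f.
Proof.
case=> hxi hnot; rewrite ltNge; apply/negP => hr; apply: hnot.
have h := esc_iter habs f hdeg _ hxi hr.
apply: (ger_cvgy _ cvgr_idn); apply: nearW => n.
case: (h n) => _ h2; apply: le_trans h2; rewrite lerDr.
rewrite /R0; apply: addr_ge0 => //; apply: divr_ge0; last exact: abs_ge0 habs _.
by apply: addr_ge0 => //; apply: sumr_ge0 => i _; exact: abs_ge0 habs _.
Qed.
Definition B0 {K : fieldType} {R : realType} (absK : K -> R) (f : {poly K}) : R :=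
  \sum_(i < size f) absK f`_i * R0 absK f ^+ i.

Definition Sset {K : fieldType} {R : realType} (absK : K -> R) (f : {poly K})
  : set (berkT K R) :=
  [set xi | [/\ 0 <= xi 'X, xi 'X <= R0 absK f, xi f <= B0 absK f & 0 <= xi f^`()]].

Lemma filledJ_S {K : fieldType} {R : realType} {absK : K -> R}
  (habs : nonarch_complete_abs absK) (f : {poly K}) (hdeg : (2 < size f)%N) :
  filledJ absK f `<=` Sset absK f.
Proof.
move=> xi hJ; have hr := filledJ_bound habs f hdeg xi hJ.
case: hJ => hxi _.
have h0 := xi_ge0 hxi.
split => //; first exact: ltW.
apply: le_trans (xi_upper habs hxi f) _.
apply: ler_sum => i _; apply: ler_wpM2l; first exact: abs_ge0 habs _.
apply: lerXn2r => //; rewrite ?nnegrE //; last exact: ltW.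
apply: le_trans (ltW hr); exact: h0.
Qed.

Lemma eval_cont {K : fieldType} {R : realType} (g : {poly K}) :
  continuous (fun xi : berkT K R => xi g).
Proof. exact: (@proj_continuous _ (fun _ : {poly K} => R) g). Qed.

Lemma closed_S {K : fieldType} {R : realType} (absK : K -> R) (f : {poly K}) :
  closed (Sset absK f).
Proof.
have cl1 (g : {poly K}) (a : R) : closed [set xi : berkT K R | a <= xi g].
  have -> : [set xi : berkT K R | a <= xi g] = (fun xi : berkT K R => xi g) @^-1` [set x | a <= x] by [].
  by apply: preimage_closed; [move=> x _; exact: eval_cont|exact: closed_ge].
have cl2 (g : {poly K}) (a : R) : closed [set xi : berkT K R | xi g <= a].
  have -> : [set xi : berkT K R | xi g <= a] = (fun xi : berkT K R => xi g) @^-1` [set x | x <= a] by [].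
  by apply: preimage_closed; [move=> x _; exact: eval_cont|exact: closed_le].
have -> : Sset absK f = [set xi | 0 <= xi 'X] `&` [set xi | xi 'X <= R0 absK f]
   `&` [set xi | xi f <= B0 absK f] `&` [set xi | 0 <= xi f^`()].
  by apply/seteqP; split => xi /=; [case=> a b c e | case=> [[[a b] c] e]].
by apply: closedI; [apply: closedI; [apply: closedI|]|].
Qed.

Lemma julia_S {K : fieldType} {R : realType} {absK : K -> R}
  (habs : nonarch_complete_abs absK) (f : {poly K}) (hdeg : (2 < size f)%N) :
  juliaJ absK f `<=` Sset absK f.
Proof.
move=> xi [hcl _].
have := closureS (filledJ_S habs f hdeg) hcl.
by rewrite -(proj1 (closure_id _) (closed_S absK f)).
Qed.

Lemma open_relint {K : fieldType} {R : realType} (absK : K -> R) (A : set (berkT K R)) :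
  open (rel_interior absK A).
Proof.
rewrite openE => xi [U [oU Uxi sub]]; rewrite /interior /=.
apply: (@filterS _ _ _ U); first by move=> y Uy; exists U.
exact: open_nbhs_nbhs.
Qed.

Lemma meas_julia {K : fieldType} {R : realType} (absK : K -> R) (f : {poly K}) :
  measurable (juliaJ absK f : set (berkM K R)).
Proof.
apply: measurableD.
  rewrite -[X in measurable X]setCK; apply: measurableC; apply: sub_sigma_algebra.
  exact/closed_openC/closed_closure.
by apply: sub_sigma_algebra; exact: open_relint.
Qed.
Lemma meas_elog {K : fieldType} {R : realType} (absK : K -> R) :
  measurable_fun [set: R] (elog_p absK).
Proof.
rewrite /elog_p.
apply: measurable_fun_ifT.
- apply: (@measurable_fun_eqr _ _ _ _ id (cst 0)); [exact: measurable_id|exact: measurable_cst].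
- exact: measurable_cst.
- apply/measurable_EFinP; apply: measurable_funM; first exact: measurable_ln.
  exact: measurable_cst.
Qed.
Definition Cb {K : fieldType} {R : realType} (absK : K -> R) (f : {poly K}) : R :=
  Num.max 1 (Num.max (R0 absK f) (B0 absK f)).

Definition Af {K : fieldType} {R : realType} (absK : K -> R) (f : {poly K})
  (xi : berkT K R) : R :=
  ln (Num.min (Num.max 1 (xi 'X)) (Cb absK f)) / ln (resp absK).

Definition hf {K : fieldType} {R : realType} (absK : K -> R) (f : {poly K})
  (xi : berkT K R) : R :=
  2 * (Af absK f xi - Af absK f (berk_act f xi)).

Lemma pointwise {K : fieldType} {R : realType} (absK : K -> R) (f : {poly K})
  (xi : berkT K R) : Sset absK f xi ->
  elog_p absK (fsharp f xi) = (elog_p absK (xi f^`()) + (hf absK f xi)%:E)%E.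
Proof.
case=> hX0 hXR hfB hd0.
have e1 : Num.min (Num.max 1 (xi 'X)) (Cb absK f) = Num.max 1 (xi 'X).
  apply: min_l; rewrite /Cb ge_max le_max lexx /=.
  by rewrite !le_max hXR !orbT.
have e2 : Num.min (Num.max 1 (xi f)) (Cb absK f) = Num.max 1 (xi f).
  apply: min_l; rewrite /Cb ge_max le_max lexx /=.
  by rewrite !le_max hfB !orbT.
have hA1 : Af absK f xi = ln (Num.max 1 (xi 'X)) / ln (resp absK) by rewrite /Af e1.
have hA2 : Af absK f (berk_act f xi) = ln (Num.max 1 (xi f)) / ln (resp absK).
  by rewrite /Af /berk_act comp_polyX e2.
rewrite /hf hA1 hA2 /fsharp.
set M1 := Num.max 1 (xi 'X); set M2 := Num.max 1 (xi f); set y := xi f^`().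
have M1p : 0 < M1 by rewrite /M1 lt_max ltr01.
have M2p : 0 < M2 by rewrite /M2 lt_max ltr01.
have [y0|yp] := eqVneq y 0.
  by rewrite y0 mulr0 /elog_p eqxx.
have ypos : 0 < y by rewrite lt_def yp hd0.
have Fp : 0 < M1 ^+ 2 / M2 ^+ 2 * y.
  by apply: mulr_gt0 => //; apply: divr_gt0; apply: exprn_gt0.
rewrite /elog_p (gt_eqF Fp) (negbTE yp) -EFinD; congr EFin.
rewrite lnM ?posrE //; last by apply: divr_gt0; apply: exprn_gt0.
rewrite lnM ?posrE //; last by rewrite invr_gt0 exprn_gt0.
rewrite lnV ?posrE ?exprn_gt0 // !lnXn //.
ring.
exact: exprn_gt0.
Qed.
Lemma Af_bound {K : fieldType} {R : realType} (absK : K -> R) (f : {poly K})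
  (xi : berkT K R) :
  `|Af absK f xi| <= `|ln (Cb absK f)| * `|(ln (resp absK))^-1|.
Proof.
rewrite /Af normrM; apply: ler_wpM2r => //.
set m := Num.min _ _.
have C1 : 1 <= Cb absK f by rewrite /Cb le_max lexx.
have m1 : 1 <= m by rewrite /m le_min C1 andbT le_max lexx.
have mC : m <= Cb absK f by rewrite /m ge_min lexx orbT.
have l0 := ln_ge0 m1.
rewrite ger0_norm // ger0_norm; last exact: ln_ge0.
have m0 : 0 < m by apply: lt_le_trans m1; exact: ltr01.
have C0 : 0 < Cb absK f by apply: lt_le_trans C1; exact: ltr01.
by rewrite ler_ln ?posrE.
Qed.

Lemma bdd_integrable {d : measure_display} {T : measurableType d} {R : realType}
  (mu : probability T R) (g : T -> R) (k : R) :
  measurable_fun setT g -> (forall x, `|g x| <= k) ->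
  mu.-integrable setT (fun x => (g x)%:E).
Proof.
move=> mg hk.
apply: (@le_integrable _ _ _ mu setT measurableT _ (EFin \o cst k)).
- exact/measurable_EFinP.
- move=> x _ /=; rewrite lee_fin; apply: le_trans (hk x) _.
  exact: ler_norm.
- exact: finite_measure_integrable_cst.
Qed.
Theorem lemma4p1 (K : closedFieldType) (R : realType) (absK : K -> R)
  (habs : nonarch_complete_abs absK) (hchar : [pchar K] =i pred0)
  (f : {poly K}) (hdeg : (2 < size f)%N)
  (mu : probability (berkM K R) R)
  (hradon : radon mu) (hinv : f_invariant f mu)
  (hsupp : mu (~` juliaJ absK f) = 0%E)
  (hint : mu.-integrable setT (fun xi => elog_p absK (fsharp f xi))) :
  Lyap absK f mu = (\int[mu]_xi elog_p absK (xi f^`()))%E.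
Proof.
have mJ : measurable (~` juliaJ absK f : set (berkM K R)).
  by apply: measurableC; exact: meas_julia.
have aeS (P : berkM K R -> Prop) : (forall x, Sset absK f x -> P x) ->
    mu.-negligible (~` [set x | P x]).
  move=> hP; exists (~` juliaJ absK f); split => // x /= hx hJ.
  by apply: hx; apply: hP; exact: julia_S habs f hdeg x hJ.
pose F := fun xi : berkM K R => elog_p absK (fsharp f xi).
pose G := fun xi : berkM K R => elog_p absK ((xi : berkT K R) f^`()).
pose H := fun xi : berkM K R => (hf absK f xi)%:E.
have mF : measurable_fun setT F by exact: measurable_int hint.
have mG : measurable_fun setT G.
  exact: measurableT_comp (meas_elog absK) (meas_eval _ _ _).
have mA : measurable_fun setT (fun xi : berkM K R => Af absK f xi).
  rewrite /Af; apply: measurable_funM; last exact: measurable_cst.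
  apply: measurableT_comp; first exact: measurable_ln.
  apply: measurable_minr; last exact: measurable_cst.
  apply: measurable_maxr; first exact: measurable_cst.
  exact: meas_eval.
have mAa : measurable_fun setT (fun xi : berkM K R => Af absK f (berk_act f xi)).
  exact: measurableT_comp mA (meas_act _ _ _).
have mh : measurable_fun setT (fun xi : berkM K R => hf absK f xi).
  apply: measurable_funM; first exact: measurable_cst.
  exact: measurable_funB.
have mH : measurable_fun setT H by exact/measurable_EFinP.
have mGH : measurable_fun setT (G \+ H)%E by exact: emeasurable_funD.
pose kb := `|ln (Cb absK f)| * `|(ln (resp absK))^-1|.
have iA : mu.-integrable setT (fun xi : berkM K R => (Af absK f xi)%:E).
  by apply: (bdd_integrable _ _ kb) => // x; exact: Af_bound.
have iAa : mu.-integrable setT (fun xi : berkM K R => (Af absK f (berk_act f xi))%:E).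
  by apply: (bdd_integrable _ _ kb) => // x; exact: Af_bound.
have iH : mu.-integrable setT H.
  apply: (bdd_integrable _ _ (2 * (kb + kb))) => // x.
  rewrite /hf normrM ger0_norm // ler_pM2l //.
  apply: le_trans (ler_normB _ _) _; apply: lerD; exact: Af_bound.
have hae : ae_eq mu setT F (G \+ H)%E.
  by apply: aeS => x hx _; exact: pointwise hx.
have e1 : Lyap absK f mu = (\int[mu]_x (G \+ H)%E x)%E.
  by rewrite /Lyap; apply: ae_eq_integral.
have iGH : mu.-integrable setT (G \+ H)%E.
  apply/integrableP; split => //.
  have <- : (\int[mu]_x `|F x| = \int[mu]_x `|(G \+ H)%E x|)%E.
    apply: ae_eq_integral => //.
    - by apply: measurableT_comp.
    - by apply: measurableT_comp.
    - by apply: aeS => x hx _; rewrite /F pointwise.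
  by case/integrableP: hint.
have iG : mu.-integrable setT G.
  have -> : G = (fun x => (G \+ H)%E x - H x)%E.
    by apply/funext => x /=; rewrite addeK.
  exact: integrableB.
have e3 : (\int[mu]_x H x = 0)%E.
  have -> : H = (fun x => 2%:E * ((Af absK f x)%:E - (Af absK f (berk_act f x))%:E))%E.
    by apply/funext => x; rewrite /H /hf EFinM EFinB.
  rewrite integralZl //; last exact: integrableB.
  rewrite integralB //.
  have -> : (\int[mu]_x (Af absK f (berk_act f x))%:E =
             \int[mu]_x (Af absK f x)%:E)%E.
    have mAE : measurable_fun setT (fun x : berkM K R => (Af absK f x)%:E).
      exact/measurable_EFinP.
    have iAa' : mu.-integrable ((berk_act f : berkM K R -> berkM K R) @^-1` setT)
        ((fun x : berkM K R => (Af absK f x)%:E) \o berk_act f).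
      by rewrite preimage_setT.
    have h1 := @integral_pushforward _ _ _ _ _ (berk_act f : berkM K R -> berkM K R)
      (meas_act _ _ _) mu setT (fun x => (Af absK f x)%:E) mAE iAa' measurableT.
    rewrite preimage_setT in h1.
    rewrite -[LHS]/(\int[mu]_x ((fun x => (Af absK f x)%:E) \o berk_act f) x)%E.
    rewrite -h1.
    apply: eq_measure_integral; first exact: (meas_act _ _ _).
    move=> B0 B mB _ /=; exact: hinv.
  by rewrite subee ?mule0 //; exact: integrable_fin_num.
rewrite e1 integralD // e3 adde0 //.
Qed.
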